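(* Fix $n\ge 2$, a dictator agent $t\in\{1,\dots,n\}$, and parameters $k\in[2,+\infty)$ and $a\in(0,1)$. Let $f$ be the mechanism that, on a profile $\mathbf{x}=(x_1,\dots,x_n)$ with $x_l=\min\mathbf{x}$, $x_r=\max\mathbf{x}$, $L=x_r-x_l$, outputs $l_1=x_t$ and $$l_2=\begin{cases} x_t+\max\left\{\frac{(1-a)k}{a}(x_t-x_l),\; x_r-x_t\right\} & \text{if } x_t\in[x_l,\,x_l+aL),\\[2pt] x_t-\max\left\{x_t-x_l,\; \frac{ak}{1-a}(x_r-x_t)\right\} & \text{if } x_t\in[x_l+aL,\,x_r].\end{cases}$$ Then for every profile $\mathbf{x}\in\mathbb{R}^n$, $SC(f,\mathbf{x})\le \max\left\{\frac{(1-a)k}{2a},\frac{ak}{2(1-a)}\right\}(n-1)\,OPT(\mathbf{x})$.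
   Context: Two-facility game on a line: agent $i$ has location $x_i\in\mathbb{R}$. For facility locations $\{l_1,l_2\}$, an agent at $y$ has cost $\min\{|l_1-y|,|l_2-y|\}$. $SC(f,\mathbf{x})$ is the sum over all agents of their costs under $f(\mathbf{x})$, and $OPT(\mathbf{x})=\min_{l_1,l_2\in\mathbb{R}}\sum_i\min\{|l_1-x_i|,|l_2-x_i|\}$. *)

(* Defs.v *)
From HB Require Import structures.
From mathcomp Require Import all_boot all_order all_algebra.
From mathcomp Require Import all_classical all_reals.
Set Implicit Arguments. Unset Strict Implicit. Unset Printing Implicit Defensive.
Import Order.TTheory GRing.Theory Num.Theory.
Local Open Scope ring_scope.
Local Open Scope classical_set_scope.

Section Defs.
Variable R : realType.

Definition agent_cost (l1 l2 y : R) : R := Num.min `|l1 - y| `|l2 - y|.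

Definition SC_loc (n : nat) (l1 l2 : R) (x : 'I_n -> R) : R :=
  \sum_(i < n) agent_cost l1 l2 (x i).

Definition OPT (n : nat) (x : 'I_n -> R) : R :=
  inf (range (fun p : R * R => SC_loc p.1 p.2 x)).

Definition xmin (n : nat) (t : 'I_n) (x : 'I_n -> R) : R :=
  \big[Num.min/x t]_(i < n) x i.
Definition xmax (n : nat) (t : 'I_n) (x : 'I_n -> R) : R :=
  \big[Num.max/x t]_(i < n) x i.

Definition mech (n : nat) (t : 'I_n) (k a : R) (x : 'I_n -> R) : R * R :=
  let xl := xmin t x in
  let xr := xmax t x in
  let L := xr - xl in
  let xt := x t in
  (xt,
   if xt < xl + a * L then
     xt + Num.max ((1 - a) * k / a * (xt - xl)) (xr - xt)
   else
     xt - Num.max (xt - xl) (a * k / (1 - a) * (xr - xt))).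

Definition SC_mech (n : nat) (t : 'I_n) (k a : R) (x : 'I_n -> R) : R :=
  SC_loc (mech t k a x).1 (mech t k a x).2 x.

End Defs.

(* Main.v *)
Require Import Defs.
From HB Require Import structures.
From mathcomp Require Import all_boot all_order all_algebra.
From mathcomp Require Import all_classical all_reals.
From mathcomp Require Import ring lra.
Import Order.TTheory GRing.Theory Num.Theory.
Local Open Scope ring_scope.

Section H.
Variable R : realType.

Lemma cost_ge0 (l1 l2 y : R) : 0 <= agent_cost l1 l2 y.
Proof. by rewrite /agent_cost le_min !normr_ge0. Qed.

Lemma cost_le1 (l1 l2 y w : R) : l1 - y <= w -> y - l1 <= w -> agent_cost l1 l2 y <= w.
Proof.
move=> h1 h2; rewrite /agent_cost ge_min; apply/orP; left.
by rewrite ler_norml; apply/andP; split; lra.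
Qed.

Lemma cost_le2 (l1 l2 y w : R) : l2 - y <= w -> y - l2 <= w -> agent_cost l1 l2 y <= w.
Proof.
move=> h1 h2; rewrite /agent_cost ge_min; apply/orP; right.
by rewrite ler_norml; apply/andP; split; lra.
Qed.

Lemma cost_lb (l1 l2 y : R) : (agent_cost l1 l2 y = `|l1 - y| \/ agent_cost l1 l2 y = `|l2 - y|).
Proof.
by rewrite /agent_cost /Order.min; case: ifP => _; [left|right].
Qed.

Lemma absge (z : R) : z <= `|z| /\ - z <= `|z|.
Proof. split; [exact: ler_norm | by rewrite -normrN ler_norm]. Qed.

Lemma triple_real (l1 l2 p q r : R) : p <= q -> q <= r ->
  q - p <= agent_cost l1 l2 p + agent_cost l1 l2 q + agent_cost l1 l2 r \/
  r - q <= agent_cost l1 l2 p + agent_cost l1 l2 q + agent_cost l1 l2 r.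
Proof.
move=> hpq hqr.
have hp0 := cost_ge0 l1 l2 p; have hq0 := cost_ge0 l1 l2 q; have hr0 := cost_ge0 l1 l2 r.
have [a1 a2] := absge (l1 - p); have [a3 a4] := absge (l2 - p).
have [b1 b2] := absge (l1 - q); have [b3 b4] := absge (l2 - q).
have [c1 c2] := absge (l1 - r); have [c3 c4] := absge (l2 - r).
case: (cost_lb l1 l2 p) => ->; case: (cost_lb l1 l2 q) => ->;
  case: (cost_lb l1 l2 r) => ->; (left; lra) || (right; lra).
Qed.

Lemma triple_S (n : nat) (l1 l2 : R) (x : 'I_n -> R) (j k m : 'I_n) :
  j != k -> k != m -> j != m -> x j <= x k -> x k <= x m ->
  x k - x j <= SC_loc l1 l2 x \/ x m - x k <= SC_loc l1 l2 x.
Proof.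
move=> hjk hkm hjm h1 h2.
have : agent_cost l1 l2 (x j) + agent_cost l1 l2 (x k) + agent_cost l1 l2 (x m)
   <= SC_loc l1 l2 x.
  rewrite /SC_loc (bigD1 j) //= (bigD1 k) /=; last by rewrite eq_sym hjk.
  rewrite (bigD1 m) /=; last by rewrite eq_sym hjm eq_sym hkm.
  rewrite !addrA lerDl; apply: sumr_ge0 => i _; exact: cost_ge0.
case: (@triple_real l1 l2 _ _ _ h1 h2) => h; [left|right]; lra.
Qed.

Lemma ex_min (n : nat) (t : 'I_n) (x : 'I_n -> R) :
  exists il, x il = xmin t x /\ forall i, x il <= x i.
Proof.
case: (@arg_minP _ _ _ t predT x isT) => il _ hil.
exists il; split; last by move=> i; apply: hil.
apply/eqP; rewrite eq_le; apply/andP; split.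
  by apply/bigmin_geP; split => [|i _]; apply: hil.
exact: bigmin_le.
Qed.

Lemma ex_max (n : nat) (t : 'I_n) (x : 'I_n -> R) :
  exists ir, x ir = xmax t x /\ forall i, x i <= x ir.
Proof.
case: (@arg_maxP _ _ _ t predT x isT) => ir _ hir.
exists ir; split; last by move=> i; apply: hir.
apply/eqP; rewrite eq_le; apply/andP; split; last first.
  by apply/bigmax_leP; split => [|i _]; apply: hir.
exact: le_bigmax.
Qed.
Lemma F1 (a k q d e : R) : 0 < a -> a < 1 -> 2 <= k ->
  q * (2 * (1 - a)) = a * k -> 0 <= e -> d * (1 - a) <= a * e -> d <= q * e.
Proof.
move=> ha0 ha1 hk hq he hd.
have hr : a <= q * (1 - a) by nra.
have hre : a * e <= q * (1 - a) * e by apply: ler_wpM2r.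
have h3 : 0 <= (q * e - d) * (1 - a) by lra.
nra.
Qed.
Lemma Cge1 (a k p q : R) : 0 < a -> a < 1 -> 2 <= k ->
  q * (2 * (1 - a)) = a * k -> p * (2 * a) = (1 - a) * k -> 1 <= Num.max p q.
Proof.
move=> ha0 ha1 hk hq hp.
case: (lerP a (1/2)) => h.
  have : 1 <= p by nra.
  move=> h1; rewrite le_max h1 //.
have : 1 <= q by nra.
move=> h1; rewrite le_max h1 orbT //.
Qed.
Lemma hqdef (a k : R) : 0 < a -> a < 1 ->
  (a * k / (2 * (1 - a))) * (2 * (1 - a)) = a * k.
Proof. move=> h0 h1; rewrite divfK //; apply: mulf_neq0; lra. Qed.
Lemma hcdef (a k : R) : 0 < a -> a < 1 ->
  (1 - a) * k / a = 2 * ((1 - a) * k / (2 * a)).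
Proof. move=> h0 h1; field; lra. Qed.

Lemma F2 (a k p d e : R) : 0 < a -> a < 1 -> 2 <= k ->
  p * (2 * a) = (1 - a) * k -> 0 <= d -> e * a <= (1 - a) * d -> e <= p * d.
Proof.
move=> ha0 ha1 hk hp hd he.
have hr : 1 - a <= p * a by nra.
have hre : (1 - a) * d <= p * a * d by apply: ler_wpM2r.
have h3 : 0 <= (p * d - e) * a by lra.
nra.
Qed.

Lemma max_cases (u v : R) :
  (Num.max u v = u /\ v <= u) \/ (Num.max u v = v /\ u <= v).
Proof.
rewrite /Order.max; case: ifP => h; [right|left]; split => //.
  exact: ltW.
by rewrite leNgt h.
Qed.

Lemma ne_lt (n : nat) (x : 'I_n -> R) (j k : 'I_n) : x j < x k -> j != k.
Proof. by move=> h; apply/eqP => e; move: h; rewrite e ltxx. Qed.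

Lemma ne_gt (n : nat) (x : 'I_n -> R) (j k : 'I_n) : x k < x j -> j != k.
Proof. by move=> h; rewrite eq_sym; apply: (@ne_lt n x k j h). Qed.

Arguments ne_lt {n x j k}.
Arguments ne_gt {n x j k}.
Arguments F1 {a k q d e}.
Arguments F2 {a k p d e}.
Arguments Cge1 {a k p q}.

Lemma per_agent (n : nat) (t : 'I_n) (k a : R) (hk : 2 <= k) (ha0 : 0 < a)
  (ha1 : a < 1) (x : 'I_n -> R) (l1 l2 : R) (i : 'I_n) :
  agent_cost (mech t k a x).1 (mech t k a x).2 (x i) <=
  Num.max ((1 - a) * k / (2 * a)) (a * k / (2 * (1 - a))) * SC_loc l1 l2 x.
Proof.
have hcd := @hcdef a k ha0 ha1.
have hcd' : a * k / (1 - a) = 2 * (a * k / (2 * (1 - a))) by field; lra.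
set p := (1 - a) * k / (2 * a).
set q := a * k / (2 * (1 - a)).
have hp : p * (2 * a) = (1 - a) * k.
  by rewrite /p divfK //; apply: mulf_neq0; lra.
have hq : q * (2 * (1 - a)) = a * k by exact: hqdef.
set C := Num.max p q.
have hC1 : 1 <= C by exact: (Cge1 ha0 ha1 hk hq hp).
have hCp : p <= C by rewrite le_max lexx.
have hCq : q <= C by rewrite le_max lexx orbT.
have hp0 : 0 <= p by rewrite /p; apply: divr_ge0; nra.
have hq0 : 0 <= q by rewrite /q; apply: divr_ge0; nra.
set S := SC_loc l1 l2 x.
have hSd : SC_loc l1 l2 x = S by [].
have hS0 : 0 <= S by apply: sumr_ge0 => j _; exact: cost_ge0.
have hCS : S <= C * S.
  have : 0 <= (C - 1) * S by apply: mulr_ge0; lra.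
  lra.
have hCm : forall u v, u <= v -> C * u <= C * v.
  by move=> u v h; apply: ler_wpM2l => //; lra.
case: (@ex_min n t x) => il [hl hil]; case: (@ex_max n t x) => ir [hr hir].
rewrite /mech /= -hl -hr.
have hxi1 := hil i; have hxi2 := hir i; have ht1 := hil t; have ht2 := hir t.
case: ifP => hc.
-
  rewrite hcd.
  set L2 := (X in agent_cost _ X _).
  set cst := agent_cost _ _ _.
  have hL : a * (x ir - x il) <= x ir - x il by nra.
  have he : x t < x ir by lra.
  have hF1 : x t - x il <= C * (x ir - x t).
    have h1 : x t - x il <= q * (x ir - x t) by apply: (F1 ha0 ha1 hk hq); lra.
    have h2 : q * (x ir - x t) <= C * (x ir - x t) by apply: ler_wpM2r; lra.
    exact: le_trans h1 h2.
  have hpd : p * (x t - x il) <= C * (x t - x il) by apply: ler_wpM2r; lra.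
  have hC0 := hCm _ _ hS0; rewrite mulr0 in hC0.
  case: (lerP (x i) (x t)) => hit.
  + have hcost : cst <= x t - x i by apply: cost_le1; lra.
    case: (eqVneq (x i) (x t)) => hyt; first lra.
    have hyt' : x i < x t by rewrite lt_neqAle hyt hit.
    case: (@triple_S n l1 l2 x i t ir (ne_lt hyt') (ne_lt he) (ne_lt (lt_le_trans hyt' (ltW he))) hit (ltW he)) => h; rewrite hSd in h.
      lra.
    have := hCm _ _ h; lra.
  + have hcost1 : cst <= x i - x t by apply: cost_le1; lra.
    case: (max_cases (2 * p * (x t - x il)) (x ir - x t)) => [[hM1 hM]|[hM1 hM]].
    * have hL2 : L2 = x t + 2 * p * (x t - x il) by rewrite /L2 hM1.
      have hd : x il < x t by nra.
      have hcost2 : cst <= x t + 2 * p * (x t - x il) - x i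
        by apply: cost_le2; lra.
      case: (@triple_S n l1 l2 x il t i (ne_lt hd) (ne_lt hit) (ne_lt (lt_trans hd hit)) (ltW hd) (ltW hit)) => h; rewrite hSd in h.
        have := hCm _ _ h; lra.
      lra.
    * have hL2 : L2 = x t + (x ir - x t) by rewrite /L2 hM1.
      have hcost2 : cst <= x ir - x i by apply: cost_le2; lra.
      case: (eqVneq (x i) (x ir)) => hyr; first lra.
      have hyr' : x i < x ir by rewrite lt_neqAle hyr hxi2.
      case: (@triple_S n l1 l2 x t i ir (ne_lt hit) (ne_lt hyr') (ne_lt he) (ltW hit) hxi2) => h; rewrite hSd in h; lra.
-
  rewrite hcd'.
  set L2 := (X in agent_cost _ X _).
  set cst := agent_cost _ _ _.
  move/negbT: hc; rewrite -leNgt => hc.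
  have hF2 : x ir - x t <= C * (x t - x il).
    have h1 : x ir - x t <= p * (x t - x il) by apply: (F2 ha0 ha1 hk hp); lra.
    have h2 : p * (x t - x il) <= C * (x t - x il) by apply: ler_wpM2r; lra.
    exact: le_trans h1 h2.
  have hqe : q * (x ir - x t) <= C * (x ir - x t) by apply: ler_wpM2r; lra.
  have hC0 := hCm _ _ hS0; rewrite mulr0 in hC0.
  case: (lerP (x t) (x i)) => hit.
  + have hcost : cst <= x i - x t by apply: cost_le1; lra.
    case: (eqVneq (x i) (x t)) => hyt; first lra.
    have hyt' : x t < x i by rewrite lt_neqAle eq_sym hyt hit.
    have hLp : 0 < a * (x ir - x il) by apply: mulr_gt0; lra.
    have hd : x il < x t by lra.
    case: (@triple_S n l1 l2 x il t i (ne_lt hd) (ne_lt hyt') (ne_lt (lt_trans hd hyt')) (ltW hd) hit) => h; rewrite hSd in h.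
      have := hCm _ _ h; lra.
    lra.
  + have hcost1 : cst <= x t - x i by apply: cost_le1; lra.
    case: (max_cases (x t - x il) (2 * q * (x ir - x t))) => [[hM1 hM]|[hM1 hM]].
    * have hL2 : L2 = x t - (x t - x il) by rewrite /L2 hM1.
      have hcost2 : cst <= x i - x il by apply: cost_le2; lra.
      case: (eqVneq (x i) (x il)) => hyl; first lra.
      have hyl' : x il < x i by rewrite lt_neqAle eq_sym hyl hxi1.
      case: (@triple_S n l1 l2 x il i t (ne_lt hyl') (ne_lt hit) (ne_lt (lt_trans hyl' hit)) hxi1 (ltW hit)) => h; rewrite hSd in h; lra.
    * have hL2 : L2 = x t - 2 * q * (x ir - x t) by rewrite /L2 hM1.
      have he : x t < x ir by nra.
      have hcost2 : cst <= 2 * q * (x ir - x t) - (x t - x i)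
        by apply: cost_le2; lra.
      case: (@triple_S n l1 l2 x i t ir (ne_lt hit) (ne_lt he) (ne_lt (lt_trans hit he)) (ltW hit) (ltW he)) => h; rewrite hSd in h.
        lra.
      have := hCm _ _ h; lra.
Qed.
Lemma SC_bound (n : nat) (t : 'I_n) (k a : R) (hn : (2 <= n)%N) (hk : 2 <= k)
  (ha0 : 0 < a) (ha1 : a < 1) (x : 'I_n -> R) (l1 l2 : R) :
  SC_mech t k a x <=
  Num.max ((1 - a) * k / (2 * a)) (a * k / (2 * (1 - a))) * (n%:R - 1) * SC_loc l1 l2 x.
Proof.
set C := Num.max _ _.
rewrite /SC_mech /SC_loc (bigD1 t) //=.
have h0 : agent_cost (mech t k a x).1 (mech t k a x).2 (x t) <= 0.
  by apply: cost_le1; rewrite /mech /= subrr.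
have h1 : \sum_(i < n | i != t) agent_cost (mech t k a x).1 (mech t k a x).2 (x i)
   <= \sum_(i < n | i != t) C * SC_loc l1 l2 x.
  by apply: ler_sum => i _; apply: per_agent.
rewrite sumr_const cardC1 card_ord in h1.
have hn1 : (n.-1)%:R = n%:R - 1 :> R.
  by rewrite -{2}(prednK (ltnW hn)) mulrSr addrK.
rewrite -mulr_natr hn1 in h1.
rewrite /SC_loc in h1.
have -> : C * (n%:R - 1) * (\sum_(i < n) agent_cost l1 l2 (x i)) =
  C * (\sum_(i < n) agent_cost l1 l2 (x i)) * (n%:R - 1) by ring.
lra.
Qed.
End H.

Theorem theorem4 (R : realType) (n : nat) (t : 'I_n) (k a : R)
  (hn : (2 <= n)%N) (hk : 2 <= k) (ha0 : 0 < a) (ha1 : a < 1)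
  (x : 'I_n -> R) :
  SC_mech t k a x <=
  Num.max ((1 - a) * k / (2 * a)) (a * k / (2 * (1 - a))) * (n%:R - 1) * OPT x.
Proof.
have hp : (1 - a) * k / (2 * a) * (2 * a) = (1 - a) * k.
  by rewrite divfK //; apply: mulf_neq0; lra.
have hq := @hqdef R a k ha0 ha1.
have hC1 := @Cge1 R a k _ _ ha0 ha1 hk hq hp.
have hn2 : 2%:R <= n%:R :> R by rewrite ler_nat.
have hz : 0 < Num.max ((1 - a) * k / (2 * a)) (a * k / (2 * (1 - a))) * (n%:R - 1).
  by apply: mulr_gt0; lra.
rewrite /OPT.
set E := (X in inf X).
have hne : nonempty E by exists (SC_loc 0 0 x); exists (0, 0).
have hlb : lbound E (SC_mech t k a x /
   (Num.max ((1 - a) * k / (2 * a)) (a * k / (2 * (1 - a))) * (n%:R - 1))).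
  move=> y [[l1 l2] _ <-]; rewrite ler_pdivrMr // mulrC.
  exact: (@SC_bound R n t k a hn hk ha0 ha1 x l1 l2).
have := lb_le_inf hne hlb.
by rewrite ler_pdivrMr // mulrC.
Qed.
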